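(* Let $\mathcal{S}$ be a communicating system, $\mathbf{l_{in}},\mathbf{l_{fin}}$ global states and $w\in\Sigma^*$. Then $w\in\mathcal{L}(\mathcal{A}_{SR}(\mathbf{l_{in}},\mathbf{l_{mid}},\mathbf{l_{fin}}))$ for some global state $\mathbf{l_{mid}}$ if and only if $\mathbf{l_{in}}\xrightarrow{msc(w)}\mathbf{l_{fin}}$.
   Context: Fix finite sets $\mathbb{M}$ of messages and $\mathbb{P}$ of processes; actions are sends $\mathrm{send}(p,q,m)$ and receives $\mathrm{rec}(p,q,m)$ (process $q$ receives $m$ from $p$). A system $\mathcal{S}$ is a family of finite automata, one per process, with transitions labelled by that process's sends and receives; its global automaton $(L_{\mathcal{S}},\delta_{\mathcal{S}},\mathbf{l_0})$ is the asynchronous product, with global states $L_{\mathcal{S}}=\prod_p L_p$, where a transition of process $q$ changes only the $q$-component. For an action sequence $e=a_1\cdots a_n$, write $\mathbf{l}\xRightarrow{e}\mathbf{l'}$ if $\mathbf{l}\xrightarrow{a_1}\cdots\xrightarrow{a_n}\mathbf{l'}$ in the global automaton (control states only, no buffers). An MSC is $(Ev,\lambda,\prec_{po},\prec_{src})$ with $\lambda$ labelling events by actions, $\prec_{po}$ totally ordering each process's events and $\prec_{src}$ matching some sends $\mathrm{send}(p,q,m)$ bijectively to all receives $\mathrm{rec}(p,q,m)$; a linearization is the action sequence of a total order extending $(\prec_{po}\cup\prec_{src})^*$. For an action sequence $e=a_1\cdots a_n$, $msc(e)$ has events $1..n$, $i\prec_{po}j$ iff $i<j$ and $a_i,a_j$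 belong to the same process, and $i\prec_{src}j$ iff $a_i=\mathrm{send}(p,q,m)$ and $a_j=\mathrm{rec}(p,q,m)$ are the $\ell$-th actions with these labels for some $\ell$, $i<j$. For an MSC $\mu$, $\mathbf{l}\xrightarrow{\mu}\mathbf{l'}$ means $\mathbf{l}\xRightarrow{e}\mathbf{l'}$ for any linearization $e$ of $\mu$. $\Sigma=\{!?,!\}\times\mathbb{M}\times\mathbb{P}^2$, symbols written $!?m^{p\to q}$, $!m^{p\to q}$. Substitutions $\sigma_1(!?m^{p\to q})=\sigma_1(!m^{p\to q})=\mathrm{send}(p,q,m)$, $\sigma_2(!?m^{p\to q})=\mathrm{rec}(p,q,m)$, $\sigma_2(!m^{p\to q})=\varepsilon$, and $msc(w)=msc(\sigma_1(w)\sigma_2(w))$. For global states $\mathbf{l_{in}},\mathbf{l_{mid}},\mathbf{l_{fin}}$, the automaton $\mathcal{A}_{SR}(\mathbf{l_{in}},\mathbf{l_{mid}},\mathbf{l_{fin}})$ over $\Sigma$ has states $L_{\mathcal{S}}\times L_{\mathcal{S}}$, initial state $(\mathbf{l_{in}},\mathbf{l_{mid}})$, single final state $(\mathbf{l_{mid}},\mathbf{l_{fin}})$, and for every global transition $(\mathbf{l_s},\mathrm{send}(p,q,m),\mathbf{l_s'})\in\delta_{\mathcal{S}}$: transitions $((\mathbf{l_s},\mathbf{l}),!m^{p\to q},(\mathbf{l_s'},\mathbf{l}))$ for all $\mathbf{l}\in L_{\mathcal{S}}$, and, for every global transition $(\mathbf{l_r},\mathrm{rec}(p,q,m),\mathbf{l_r'})\in\delta_{\mathcal{S}}$,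 a transition $((\mathbf{l_s},\mathbf{l_r}),!?m^{p\to q},(\mathbf{l_s'},\mathbf{l_r'}))$. $\mathcal{L}(\cdot)$ denotes its language. *)

(* Defs.v *)
From Stdlib Require Import Relations.
From mathcomp Require Import all_boot.
Set Implicit Arguments. Unset Strict Implicit. Unset Printing Implicit Defensive.

Section Defs.
Variables (P M : finType).

(* Actions: send(p,q,m) and rec(p,q,m) (q receives m from p). *)
Inductive action := Send of P & P & M | Rec of P & P & M.

Definition proc (a : action) : P :=
  match a with Send p _ _ => p | Rec _ q _ => q end.

(* A communicating system: one finite automaton per process.
   Transitions of process p are only used with actions a such that proc a = p. *)
Record system := System {
  loc : P -> finType;
  init : forall p, loc p;
  trans : forall p, loc p -> action -> loc p -> Prop }.

Variable S : system.

Definition gstate := forall p : P, loc S p.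

Definition gstep (l : gstate) (a : action) (l' : gstate) : Prop :=
  @trans S (proc a) (l (proc a)) a (l' (proc a)) /\ (forall r, r <> proc a -> l' r = l r).

Fixpoint greach (l : gstate) (e : seq action) (l' : gstate) : Prop :=
  match e with
  | [::] => l = l'
  | a :: e' => exists l'', gstep l a l'' /\ greach l'' e' l'
  end.

Definition is_send_lbl p q m (a : action) : bool :=
  match a with Send p' q' m' => [&& p' == p, q' == q & m' == m] | _ => false end.
Definition is_rec_lbl p q m (a : action) : bool :=
  match a with Rec p' q' m' => [&& p' == p, q' == q & m' == m] | _ => false end.

Definition msc_po (e : seq action) (i j : nat) : Prop :=
  i < j /\ j < size e /\
  exists ai aj, onth e i = Some ai /\ onth e j = Some aj /\ proc ai = proc aj.

(* i <_src j : a_i = send(p,q,m), a_j = rec(p,q,m) are the l-th actions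
   with these labels (same number of earlier occurrences), and i < j. *)
Definition msc_src (e : seq action) (i j : nat) : Prop :=
  i < j /\ exists p q m,
    onth e i = Some (Send p q m) /\ onth e j = Some (Rec p q m) /\
    count (is_send_lbl p q m) (take i e) = count (is_rec_lbl p q m) (take j e).

Definition msc_order (e : seq action) : relation nat :=
  clos_refl_trans nat (fun i j => msc_po e i j \/ msc_src e i j).

(* lin is a linearization of msc(e): the action sequence of a total order
   (given as an enumeration s of the events) extending (po U src)^*. *)
Definition msc_linearization (e : seq action) (lin : seq action) : Prop :=
  exists s : seq nat,
    perm_eq s (iota 0 (size e)) /\
    (forall i j, i < size e -> j < size e -> msc_order e i j ->
       index i s <= index j s) /\
    lin = pmap (onth e) s.

Definition msc_reach (l : gstate) (e : seq action) (l' : gstate) : Prop :=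
  forall lin, msc_linearization e lin -> greach l lin l'.

Inductive sym := SR of P & P & M
               | SO of P & P & M.

Definition sigma1 (x : sym) : action :=
  match x with SR p q m => Send p q m | SO p q m => Send p q m end.
Definition sigma2 (x : sym) : option action :=
  match x with SR p q m => Some (Rec p q m) | SO _ _ _ => None end.

(* sigma1(w) sigma2(w) ; msc(w) := msc of this sequence *)
Definition word_actions (w : seq sym) : seq action :=
  map sigma1 w ++ pmap sigma2 w.

Definition asr_step (x : gstate * gstate) (c : sym) (y : gstate * gstate) : Prop :=
  match c with
  | SO p q m => gstep x.1 (Send p q m) y.1 /\ y.2 = x.2
  | SR p q m => gstep x.1 (Send p q m) y.1 /\ gstep x.2 (Rec p q m) y.2
  end.

Fixpoint asr_run (x : gstate * gstate) (w : seq sym) (y : gstate * gstate) : Prop :=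
  match w with
  | [::] => x = y
  | c :: w' => exists z, asr_step x c z /\ asr_run z w' y
  end.

Definition in_ASR (lin lmid lfin : gstate) (w : seq sym) : Prop :=
  asr_run (lin, lmid) w (lmid, lfin).

End Defs.

(* Main.v *)
Require Import Defs.
From mathcomp Require Import all_boot.
From Stdlib Require Import Relations FunctionalExtensionality.

Set Implicit Arguments. Unset Strict Implicit.

Section Aux.
Variables (P M : finType) (S : system P M).

Fixpoint lreach (p : P) (x : loc S p) (e : seq (action P M)) (y : loc S p) : Prop :=
  match e with
  | [::] => x = y
  | a :: e' => exists z, trans x a z /\ lreach z e' y
  end.

Lemma greach_local (l l' : gstate S) e :
  greach l e l' <-> forall p, lreach (l p) [seq a <- e | proc a == p] (l' p).
Proof.
elim: e l => [|a e IH] l /=.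
  split; first by move=> ->.
  by move=> H; apply: functional_extensionality_dep.
split.
  move=> [l'' [[Ht Hr] Hg]] p.
  have /IH Hl := Hg.
  case: (eqVneq (proc a) p) => [<-|ne].
    by exists (l'' (proc a)); split.
  rewrite -(Hr p) //; last by move=> E; rewrite E eqxx in ne.
move=> H.
have := H (proc a); rewrite /= ?eqxx => -[z [Ht Hl]].
exists (dfwith l z); split.
  split; first by rewrite dfwith_in.
  by move=> r ne; rewrite dfwith_out //; apply/eqP => E; apply: ne.
apply/IH => p.
case: (eqVneq (proc a) p) => [E|ne].
  by subst p; rewrite dfwith_in.
rewrite dfwith_out //. have := H p. by rewrite (negbTE ne).
Qed.

Lemma greach_cat (l l' : gstate S) e1 e2 :
  greach l (e1 ++ e2) l' <-> exists m, greach l e1 m /\ greach m e2 l'.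
Proof.
elim: e1 l => [|a e1 IH] l /=.
  by split; [move=> H; exists l | move=> [m [-> H]]].
split.
  move=> [l'' [Hs /IH [m [H1 H2]]]]; exists m; split => //; exists l''; by [].
move=> [m [[l'' [Hs H1]] H2]]; exists l''; split => //; apply/IH; by exists m.
Qed.

Lemma asr_run_split (x1 x2 y1 y2 : gstate S) w :
  asr_run (x1, x2) w (y1, y2) <->
  greach x1 (map (@sigma1 P M) w) y1 /\ greach x2 (pmap (@sigma2 P M) w) y2.
Proof.
elim: w x1 x2 => [|c w IH] x1 x2 /=.
  split; first by case=> -> ->.
  by case=> -> ->.
case: c => p q m /=.
  split.
    move=> [[z1 z2] [[H1 H2] /IH [R1 R2]]].
    by split; [exists z1 | exists z2].
  move=> [[z1 [H1 R1]] [z2 [H2 R2]]].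
  exists (z1, z2); split => //; apply/IH; by [].
split.
  move=> [[z1 z2] [[H1 /= H2] /IH [R1 R2]]].
  by subst z2; split => //; exists z1.
move=> [[z1 [H1 R1]] R2].
exists (z1, x2); split => //; apply/IH; by [].
Qed.

Lemma pmap_onth_iota (e pre : seq (action P M)) :
  pmap (onth (pre ++ e)) (iota (size pre) (size e)) = e.
Proof.
elim: e pre => [|a e IH] pre //=.
rewrite onth_cat ltnn subnn /=.
by rewrite -cat_rcons -(size_rcons pre a) IH.
Qed.

Lemma filter_pmap (T U : Type) (f : T -> option U) (a : pred U) s :
  filter a (pmap f s) = pmap f (filter (fun x => oapp a false (f x)) s).
Proof.
elim: s => [|x s IH] //=.
rewrite /=; case E: (f x) => [u|] /=; last exact: IH.
case: (a u) => /=; [by rewrite E IH | exact: IH].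
Qed.

Lemma pairwise_filter_ltn (R : rel nat) (q : pred nat) s :
  (forall x y, R x y -> q x -> q y -> x < y) ->
  pairwise R s -> pairwise ltn (filter q s).
Proof.
move=> HR; elim: s => [|x s IH] //= /andP [Hx Hs].
case: ifP => qx /=; last exact: IH.
rewrite IH // andbT all_filter.
apply/allP => y ys; apply/implyP => qy.
by apply: HR qx qy; move/allP: Hx; apply.
Qed.

Lemma msc_order_le (e : seq (action P M)) i j : msc_order e i j -> i <= j.
Proof.
elim => [x y [[H _]|[H _]]||x y z _ H1 _ H2] //; first exact: ltnW.
  exact: ltnW.
exact: leq_trans H2.
Qed.

Lemma lin_proj (e lin : seq (action P M)) (p : P) :
  msc_linearization e lin ->
  [seq a <- lin | proc a == p] = [seq a <- e | proc a == p].
Proof.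
move=> [s [Hperm [Hord ->]]].
rewrite -{2}(pmap_onth_iota e [::]) /= !filter_pmap.
set q := (fun x => _).
congr pmap.
have Hu : uniq s by rewrite (perm_uniq Hperm) iota_uniq.
have Hmem : forall x, x \in s -> x < size e.
  by move=> x; rewrite (perm_mem Hperm) mem_iota.
apply: (irr_sorted_eq ltn_trans ltnn).
- rewrite sorted_pairwise; last exact: ltn_trans.
  apply: (@pairwise_filter_ltn (fun x y => q x ==> q y ==> (x < y))).
    by move=> x y /implyP H /H /implyP H' /H'.
  apply/(pairwiseP 0) => i j; rewrite !inE => ilt jlt ij.
  apply/implyP => qi; apply/implyP => qj.
  rewrite ltnNge; apply/negP => le.
  move: le; rewrite leq_eqVlt => /orP [/eqP E|lt].
    by move/eqP: E; rewrite nth_uniq // => /eqP E; rewrite E ltnn in ij.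
  have xi : nth 0 s i < size e by apply: Hmem; apply: mem_nth.
  have yj : nth 0 s j < size e by apply: Hmem; apply: mem_nth.
  have Ho : msc_order e (nth 0 s j) (nth 0 s i).
    apply: rt_step; left; split => //; split => //.
    move: qi qj; rewrite /q.
    case: (onth e (nth 0 s i)) => [ai|] //= /eqP Hi.
    case: (onth e (nth 0 s j)) => [aj|] //= /eqP Hj.
    by exists aj, ai; rewrite Hi Hj.
  have := Hord _ _ yj xi Ho.
  by rewrite !index_uniq // leqNgt ij.
- by apply: sorted_filter; [exact: ltn_trans | exact: iota_ltn_sorted].
- by apply: perm_mem; apply: perm_filter.
Qed.

Lemma msc_reach_greach (l l' : gstate S) e :
  msc_reach l e l' <-> greach l e l'.
Proof.
split.
  move=> H; apply: H; exists (iota 0 (size e)); split => //; split.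
    move=> i j il jl /msc_order_le le.
    have Ei := nth_iota 0 0 il; have Ej := nth_iota 0 0 jl.
    rewrite add0n in Ei; rewrite add0n in Ej.
    have -> : index i (iota 0 (size e)) = i.
      by rewrite -{1}Ei index_uniq ?size_iota ?iota_uniq.
    have -> : index j (iota 0 (size e)) = j.
      by rewrite -{1}Ej index_uniq ?size_iota ?iota_uniq.
    exact: le.
  by rewrite -{1}(pmap_onth_iota e [::]).
move=> H lin Hlin.
apply/greach_local => p; rewrite (lin_proj p Hlin).
by move/greach_local: H.
Qed.

End Aux.

Theorem lemma3 (P M : finType) (S : system P M) (lin lfin : gstate S)
    (w : seq (sym P M)) :
  (exists lmid : gstate S, in_ASR lin lmid lfin w) <->
  msc_reach lin (word_actions w) lfin.
Proof.
split.
  move=> [m /asr_run_split [H1 H2]].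
  by apply/msc_reach_greach/greach_cat; exists m.
move=> /msc_reach_greach/greach_cat [m [H1 H2]]; exists m.
exact/asr_run_split.
Qed.
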